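(* Let $\epsilon>0$, $\beta\in(0,1)$, $\delta\in(0,1)$, and let $c:\mathbb{N}^2\times(0,1)\to\mathbb{R}_+$ (indexed by $\epsilon$ and phase indices $k_1,k_2$) be any family of threshold functions. If all rewards lie in $[0,1]$ (i.e. the potential-reward tables are in $([0,1]^K)^T$), then the algorithm AdaP-TT described in the context satisfies $\epsilon$-global DP.
   Context: Setting: $K$ arms; at each round $n$ the algorithm pulls $I_n\in[K]$ and observes reward $X_n$. $N_{n,a}=\sum_{t<n}\mathbf{1}\{I_t=a\}$. Laplace$(b)$ denotes the distribution with density $\frac{1}{2b}e^{-|x|/b}$. AdaP-TT (inputs $\beta,\delta,\epsilon$, thresholds $c_{\epsilon,k_1,k_2}$): In rounds $1,\dots,K$ pull each arm once. For each arm $a$ set phase index $k_a=1$, $T_1(a)=K+1$, $\tilde N_{1,a}=1$, $\tilde\mu_{1,a}=$ (initial reward of $a$) $+Y_{1,a}$ with $Y_{1,a}\sim$ Laplace$(1/\epsilon)$; $L_{n,a}$ = number of rounds $t<n$ with $B_t=a$; $N^a_{n,b}$ = number of rounds $t<n$ with $B_t=a$ and $I_t=b$. For each round $n>K$: (1) For every arm $a$ with $N_{n,a}\ge 2N_{T_{k_a}(a),a}$: set $k_a\leftarrow k_a+1$, $T_{k_a}(a)=n$, $\tilde N_{k_a,a}=N_{T_{k_a}(a),a}-N_{T_{k_a-1}(a),a}$, $\hat\mu_{k_a,a}=\tilde N_{k_a,a}^{-1}\sum_{s=T_{k_a-1}(a)}^{T_{k_a}(a)-1}X_s\mathbf{1}\{I_s=a\}$,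 and $\tilde\mu_{k_a,a}=\hat\mu_{k_a,a}+Y_{k_a,a}$ with fresh independent $Y_{k_a,a}\sim$ Laplace$(1/(\epsilon\tilde N_{k_a,a}))$. (2) $\hat a_n=\arg\max_b\tilde\mu_{k_b,b}$. (3) If for all $b\ne\hat a_n$, $\frac{(\tilde\mu_{k_{\hat a_n},\hat a_n}-\tilde\mu_{k_b,b})^2}{1/\tilde N_{k_{\hat a_n},\hat a_n}+1/\tilde N_{k_b,b}}\ge 2c_{\epsilon,k_{\hat a_n},k_b}(\tilde N_{k_{\hat a_n},\hat a_n},\tilde N_{k_b,b},\delta)$, stop and output recommendation $\hat a_n$ and stopping time $n$. (4) Leader $B_n=\arg\max_a\{\tilde\mu_{k_a,a}+\sqrt{k_a/\tilde N_{k_a,a}}+k_a/(\epsilon\tilde N_{k_a,a})\}$; challenger $C_n=\arg\min_{a\ne B_n}\frac{\tilde\mu_{k_{B_n},B_n}-\tilde\mu_{k_a,a}}{\sqrt{1/N_{n,B_n}+1/N_{n,a}}}$. (5) $I_n=B_n$ if $N^{B_n}_{n,B_n}\le\beta L_{n+1,B_n}$ (where $L_{n+1,B_n}=L_{n,B_n}+1$), else $I_n=C_n$; pull $I_n$, observe $X_n$, update counts. $\epsilon$-global DP: each user $t$ is a vector $\mathbf{x}_t\in\mathbb{R}^K$ of potential rewards and the reward observed at round $t$ is $x_{t,I_t}$. For a table $\underline{\mathbf{d}}^T=(\mathbf{x}_1,\dots,\mathbf{x}_T)$, let $\pi(\underline{a}^T,\hat a,T\mid\underline{\mathbf{d}}^T)$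 be the probability that the algorithm pulls exactly $a_1,\dots,a_T$, then stops and recommends $\hat a$. The algorithm is $\epsilon$-global DP if $\pi(\underline{a}^T,\hat a,T\mid\underline{\mathbf{d}}^T)\le e^\epsilon\pi(\underline{a}^T,\hat a,T\mid\underline{\mathbf{d}}'^T)$ for all $T$, all tables $\underline{\mathbf{d}}^T,\underline{\mathbf{d}}'^T$ differing in exactly one row, all $\underline{a}^T\in[K]^T$, $\hat a\in[K]$. *)

(* Defs.v *)
From HB Require Import structures.
From mathcomp Require Import all_boot all_order all_algebra.
From mathcomp Require Import all_classical all_reals all_analysis.
Set Implicit Arguments.
Unset Strict Implicit.
Unset Printing Implicit Defensive.
Import Order.TTheory GRing.Theory Num.Theory.
Local Open Scope ring_scope.

(* Arms are the natural numbers 0..K-1 (arm a of the paper = a-1 here).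
   Rounds are numbered 1,2,...; a reward table is d : nat -> nat -> R with
   d t a = x_{t,a} the potential reward of user t for arm a. *)

Section AdaPTT.
Context {R : realType}.

Definition fupd {T : Type} (f : nat -> T) (a : nat) (v : T) : nat -> T :=
  fun b => if b == a then v else f b.

Definition argmax_in (f : nat -> R) (l : seq nat) : nat :=
  foldl (fun b i => if f b < f i then i else b) (head 0%N l) l.
Definition argmin_in (f : nat -> R) (l : seq nat) : nat :=
  foldl (fun b i => if f i < f b then i else b) (head 0%N l) l.

Record st := St {
  s_n : nat;
  s_cnt : nat -> nat;        (* N_{n,a} *)
  s_k : nat -> nat;          (* phase index k_a *)
  s_c0 : nat -> nat;         (* N_{T_{k_a}(a),a} *)
  s_Nt : nat -> nat;         (* tilde N_{k_a,a} *)
  s_mu : nat -> R;           (* tilde mu_{k_a,a} *)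
  s_sum : nat -> R;          (* sum of rewards of a over rounds T_{k_a}(a) .. n-1 *)
  s_L : nat -> nat;          (* L_{n,a} *)
  s_NB : nat -> nat -> nat;  (* N^a_{n,b} *)
  s_j : nat;                 (* index of the next unused standard noise draw *)
  s_pulls : seq nat          (* I_1, ..., I_{n-1} *)
}.

Variables (K : nat) (beta delta eps : R)
  (c : R -> nat -> nat -> nat -> nat -> R -> R)  (* c eps k1 k2 N1 N2 delta *)
  (d : nat -> nat -> R)
  (z : seq R).                                    (* i.i.d. Laplace(1) draws *)

(* The j-th noise draw of the run is z_j / (eps * tilde N), which is
   Laplace(1/(eps tilde N)) distributed when z_j ~ Laplace(1). *)

Definition phase_upd (s : st) (a : nat) : st :=
  if (2 * s_c0 s a <= s_cnt s a)%N then
    let Nt := (s_cnt s a - s_c0 s a)%N in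
    let hat := s_sum s a / Nt%:R in
    let y := nth 0 z (s_j s) / (eps * Nt%:R) in
    St (s_n s) (s_cnt s) (fupd (s_k s) a (s_k s a).+1)
       (fupd (s_c0 s) a (s_cnt s a)) (fupd (s_Nt s) a Nt)
       (fupd (s_mu s) a (hat + y)) (fupd (s_sum s) a 0)
       (s_L s) (s_NB s) (s_j s).+1 (s_pulls s)
  else s.

Definition round (s0 : st) : (nat * nat) + st :=
  let s := foldl phase_upd s0 (iota 0 K) in
  let arms := iota 0 K in
  let ahat := argmax_in (s_mu s) arms in
  let glr b := (s_mu s ahat - s_mu s b) ^+ 2
                 / ((s_Nt s ahat)%:R^-1 + (s_Nt s b)%:R^-1) in
  if all (fun b => (b == ahat) ||
        (2 * c eps (s_k s ahat) (s_k s b) (s_Nt s ahat) (s_Nt s b) delta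
           <= glr b)) arms
  then inl (s_n s, ahat)
  else
    let idx a := s_mu s a + Num.sqrt ((s_k s a)%:R / (s_Nt s a)%:R)
                 + (s_k s a)%:R / (eps * (s_Nt s a)%:R) in
    let B := argmax_in idx arms in
    let tc a := (s_mu s B - s_mu s a)
                / Num.sqrt ((s_cnt s B)%:R^-1 + (s_cnt s a)%:R^-1) in
    let C := argmin_in tc [seq a <- arms | a != B] in
    let I := if (s_NB s B B)%:R <= beta * ((s_L s B).+1)%:R then B else C in
    let X := d (s_n s) I in
    inr (St (s_n s).+1 (fupd (s_cnt s) I (s_cnt s I).+1) (s_k s) (s_c0 s)
            (s_Nt s) (s_mu s) (fupd (s_sum s) I (s_sum s I + X))
            (fupd (s_L s) B (s_L s B).+1)
            (fun a b => if (a == B) && (b == I) then (s_NB s a b).+1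
                        else s_NB s a b)
            (s_j s) (rcons (s_pulls s) I)).

(* State after rounds 1..K (arm a-1 pulled at round a), at round K+1. *)
Definition init : st :=
  St K.+1 (fun _ => 1%N) (fun _ => 1%N) (fun _ => 1%N) (fun _ => 1%N)
     (fun a => d a.+1 a + nth 0 z a / eps) (fun _ => 0)
     (fun _ => 0%N) (fun _ _ => 0%N) K (iota 0 K).

Fixpoint sim (fuel : nat) (s : st) : seq nat * option (nat * nat) :=
  match fuel with
  | 0 => (s_pulls s, None)
  | f.+1 => match round s with
            | inl o => (s_pulls s, Some o)
            | inr s' => sim f s'
            end
  end.

(* The run pulls exactly a_1..a_T, then (at round T+1) stops and recommends ahat. *)
Definition traj_event (a : seq nat) (ahat T : nat) : bool :=
  sim T.+1 init == (a, Some (T.+1, ahat)).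

End AdaPTT.

Definition lap_pdf {R : realType} (b x : R) : R := (2 * b)^-1 * expR (- `|x| / b).

(* iterated integral against m i.i.d. Laplace(1) coordinates z_0 (outermost), z_1, ... *)
Fixpoint iint {R : realType} (m : nat) (F : seq R -> \bar R) : \bar R :=
  match m with
  | 0 => F [::]
  | m'.+1 => (\int[@lebesgue_measure R]_(y in [set: R])
               ((lap_pdf 1 y)%:E * iint m' (fun s => F (y :: s))))%E
  end.

(* pi(a^T, ahat, T | d^T): the run up to round T+1 uses at most
   K * (T+2) noise draws (each arm has at most log2 T + 1 phases), so
   integrating over K*(T+2) i.i.d. Laplace(1) draws gives the probability. *)
Definition traj_prob {R : realType} (K : nat) (beta delta eps : R)
  (c : R -> nat -> nat -> nat -> nat -> R -> R) (d : nat -> nat -> R)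
  (a : seq nat) (ahat T : nat) : \bar R :=
  iint (K * T.+2) (fun z =>
    (if traj_event K beta delta eps c d z a ahat T then 1 else 0)%:E).

(* Main.v *)
Require Import Defs.
From HB Require Import structures.
From mathcomp Require Import all_boot all_order all_algebra.
From mathcomp Require Import all_classical all_reals all_analysis.
From mathcomp Require Import ring lra zify.
Import Order.TTheory GRing.Theory Num.Theory.
Local Open Scope ring_scope.
Local Open Scope classical_set_scope.

Section shiftmeasure.
Context (R : realType) (del : R).
Local Open Scope ereal_scope.

Lemma mshift0 : measurable_fun [set: R] (fun x : R => x - del)%R.
Proof. by apply: measurable_realfun.measurable_funB; [exact: measurable_id| exact: measurable_cst]. Qed.

Lemma mshift : measurable_fun (T:=measurableTypeR R) (U:=measurableTypeR R) [set: R] (fun x : R => x - del)%R.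
Proof. exact: mshift0. Qed.

Definition shmu (A : set (measurableTypeR R)) : \bar R :=
  @lebesgue_measure R ((fun x : R => x - del)%R @^-1` A).

Let shmu0 : shmu set0 = 0.
Proof. by rewrite /shmu preimage_set0 measure0. Qed.

Let shmu_ge0 A : 0 <= shmu A.
Proof. exact: measure_ge0. Qed.

Let shmu_sigma_additive : semi_sigma_additive shmu.
Proof.
move=> F mF tF mUF; rewrite /shmu preimage_bigcup.
apply: measure_semi_sigma_additive.
- by move=> n; rewrite -[X in measurable X]setTI; apply: mshift.
- apply/trivIsetP => /= i j _ _ ij; rewrite -preimage_setI.
  by move/trivIsetP : tF => /(_ _ _ _ _ ij) ->//; rewrite preimage_set0.
- by rewrite -preimage_bigcup -[X in measurable X]setTI; apply: mshift.
Qed.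

HB.instance Definition _ := isMeasure.Build _ _ _
  shmu shmu0 shmu_ge0 shmu_sigma_additive.

Lemma shmuE (A : set (measurableTypeR R)) : measurable A ->
  @lebesgue_measure R A = shmu A.
Proof.
apply: lebesgue_measure_unique => X [[a b] _ <-] /=.
rewrite /shmu.
have -> : ((fun x : R => x - del)%R @^-1` `]a, b]) = `](a + del)%R, (b + del)%R] :> set R.
  apply/seteqP; split => x; rewrite /= !in_itv /=.
    by rewrite ltrBrDr lerBlDr.
  by rewrite ltrBrDr lerBlDr.
rewrite !lebesgue_measure_itv /= !lte_fin ltrD2r.
by case: ifP => // _; rewrite -!EFinD; congr (_%:E); lra.
Qed.
End shiftmeasure.
Section shiftnn.
Import HBNNSimple.
Context (R : realType) (del : R) (h : {nnsfun measurableTypeR R >-> R}).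

Definition hsh : measurableTypeR R -> R := fun x => h (x - del)%R.

Let hsh_meas : measurable_fun setT hsh.
Proof.
rewrite /hsh; apply: (measurableT_comp (f := h) (g := fun x : R => (x - del)%R)).
  exact: measurable_funPT.
exact: mshift.
Qed.
HB.instance Definition _ := isMeasurableFun.Build _ _ _ _ hsh hsh_meas.

Let hsh_fin : finite_set (range hsh).
Proof.
apply: (sub_finite_set _ (fimfunP h)) => _ [x _ <-]; by exists (x - del)%R.
Qed.
HB.instance Definition _ := @FiniteImage.Build _ _ hsh hsh_fin.

Let hsh_ge0 : forall x, (0 <= hsh x)%R.
Proof. by move=> x; rewrite /hsh. Qed.
HB.instance Definition _ := @isNonNegFun.Build _ _ hsh hsh_ge0.

Definition hsh_nnsfun : {nnsfun measurableTypeR R >-> R} := hsh.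

Lemma sintegral_hsh : sintegral (@lebesgue_measure R) hsh_nnsfun = sintegral (@lebesgue_measure R) h.
Proof.
rewrite /sintegral; apply: eq_fsbigr => r _; congr (_ * _)%E.
rewrite [RHS](shmuE _ del); last first.
  by rewrite -[X in measurable X]setTI; apply: measurable_funPT.
by [].
Qed.
End shiftnn.
Section nnint.
Import HBNNSimple.
Context (R : realType).
Local Open Scope ereal_scope.
Definition nnint (f : R -> \bar R) := ereal_sup [set sintegral (@lebesgue_measure R) (h : measurableTypeR R -> R) | h in [set h : {nnsfun measurableTypeR R >-> R} | forall x, (h x)%:E <= f x]].

Lemma intTE (f : R -> \bar R) : (forall x, 0 <= f x) ->
  \int[@lebesgue_measure R]_(y in [set: R]) f y = nnint f.
Proof. move=> f0. exact: ge0_integralTE. Qed.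

Lemma nnint_le f g : (forall x, f x <= g x) -> nnint f <= nnint g.
Proof.
move=> fg; apply: ge_ereal_sup => _ [h hf <-]; apply: ereal_sup_ubound; exists h => // x.
exact: le_trans (hf x) (fg x).
Qed.

Lemma nnint_shift f del : nnint (fun x => f (x + del)%R) <= nnint f.
Proof.
apply: ge_ereal_sup => _ [h hf <-].
rewrite -(sintegral_hsh _ del h).
apply: ereal_sup_ubound; exists (hsh_nnsfun _ del h) => // x.
rewrite /= /hsh. have := hf (x - del)%R. by rewrite subrK.
Qed.

Lemma nnint_scale f (k : R) : (0 < k)%R -> nnint (fun x => k%:E * f x) <= k%:E * nnint f.
Proof.
move=> k0; apply: ge_ereal_sup => _ [h hf <-].
have k0' : (0 <= k^-1)%R by rewrite invr_ge0 ltW.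
pose h' := scale_nnsfun h k0'.
have -> : sintegral (@lebesgue_measure R) h = k%:E * sintegral (@lebesgue_measure R) h'.
  rewrite -sintegralrM; apply: eq_sintegral => x /=.
  by rewrite mulrA mulfV ?gt_eqF // mul1r.
rewrite lee_pmul2l ?lte_fin //; last first.
apply: ereal_sup_ubound; exists h' => // x.
rewrite /h' /=.
have := hf x => hx.
have -> : f x = k^-1%:E * (k%:E * f x) by rewrite muleA -EFinM mulVf ?gt_eqF // mul1e.
rewrite EFinM; apply: lee_wpmul2l => //.
Qed.
End nnint.
Section iintlemmas.
Context (R : realType).
Local Open Scope ereal_scope.

Definition shift (j : nat) (del : R) (z : seq R) : seq R := set_nth 0%R z j (nth 0%R z j + del)%R.

Lemma lap_ge0 (y : R) : (0 <= lap_pdf 1%R y)%R.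
Proof. by rewrite /lap_pdf mulr_ge0 // ?invr_ge0 ?mulr_ge0 // expR_ge0. Qed.

Lemma iint_ge0 m (F : seq R -> \bar R) : (forall z, size z = m -> 0 <= F z) -> 0 <= iint m F.
Proof.
elim: m F => [|m IH] F F0 /=; first exact: F0.
apply: integral_ge0 => y _; apply: mule_ge0; first by rewrite lee_fin lap_ge0.
by apply: IH => z zs; apply: F0; rewrite /= zs.
Qed.

Lemma iint_le m (F G : seq R -> \bar R) : (forall z, size z = m -> 0 <= F z) ->
  (forall z, size z = m -> F z <= G z) -> iint m F <= iint m G.
Proof.
elim: m F G => [|m IH] F G F0 FG /=; first exact: FG.
have G0 z : size z = m.+1 -> 0 <= G z by move=> zs; exact: le_trans (F0 _ zs) (FG _ zs).
have A1 (y : R) : 0 <= (lap_pdf 1%R y)%:E * iint m (fun s => G (y :: s)).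
  apply: mule_ge0; first by rewrite lee_fin lap_ge0.
  by apply: iint_ge0 => z zs; apply: G0; rewrite /= zs.
have A2 (y : R) : 0 <= (lap_pdf 1%R y)%:E * iint m (fun s => F (y :: s)).
  apply: mule_ge0; first by rewrite lee_fin lap_ge0.
  by apply: iint_ge0 => z zs; apply: F0; rewrite /= zs.
rewrite !intTE //.
apply: nnint_le => y; apply: lee_wpmul2l; first by rewrite lee_fin lap_ge0.
by apply: IH => z zs; [apply: F0|apply: FG]; rewrite /= zs.
Qed.

Lemma lap_shift (eps del y : R) : (`|del| <= eps)%R ->
  (lap_pdf 1%R y <= expR eps * lap_pdf 1 (y + del))%R.
Proof.
move=> hd; rewrite /lap_pdf mulrCA ler_pM2l; last by rewrite invr_gt0 mulr_gt0.
rewrite -expRD ler_expR !divr1.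
have := ler_normD y del; lra.
Qed.

Lemma iint_dp m (F G : seq R -> \bar R) (j : nat) (eps del : R) :
  (0 < eps)%R -> (`|del| <= eps)%R -> (j < m)%N ->
  (forall z, size z = m -> 0 <= F z) -> (forall z, size z = m -> 0 <= G z) ->
  (forall z, size z = m -> F z <= G (shift j del z)) ->
  iint m F <= (expR eps)%:E * iint m G.
Proof.
move=> e0 hd.
elim: m F G j => [|m IH] F G j // jm F0 G0 FG /=.
have HF0 (y : R) : 0 <= iint m (fun s => F (y :: s)).
  by apply: iint_ge0 => z zs; apply: F0; rewrite /= zs.
have HG0 (y : R) : 0 <= iint m (fun s => G (y :: s)).
  by apply: iint_ge0 => z zs; apply: G0; rewrite /= zs.
have la (y : R) : 0 <= (lap_pdf 1%R y)%:E by rewrite lee_fin lap_ge0.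
have A1 (y : R) : 0 <= (lap_pdf 1%R y)%:E * iint m (fun s => G (y :: s)) by apply: mule_ge0.
have A2 (y : R) : 0 <= (lap_pdf 1%R y)%:E * iint m (fun s => F (y :: s)) by apply: mule_ge0.
rewrite !intTE //.
case: j jm FG => [|j] jm FG.
  apply: (@le_trans _ _ (nnint _ (fun y => (expR eps)%:E * ((fun y => (lap_pdf 1%R y)%:E * iint m (fun s => G (y :: s))) (y + del)%R)))).
    apply: nnint_le => y /=.
    rewrite muleA -EFinM; apply: lee_pmul => //; first by rewrite lee_fin lap_shift.
    apply: iint_le => [z zs|z zs]; first by apply: F0; rewrite /= zs.
    by have := FG (y :: z); rewrite /= zs; apply.
  apply: le_trans; first exact: nnint_scale (expR_gt0 _).
  apply: lee_wpmul2l; first by rewrite lee_fin expR_ge0.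
  exact: (nnint_shift _ (fun y => (lap_pdf 1%R y)%:E * iint m (fun s => G (y :: s)))).
apply: (@le_trans _ _ (nnint _ (fun y => (expR eps)%:E * ((lap_pdf 1%R y)%:E * iint m (fun s => G (y :: s)))))).
  apply: nnint_le => y /=.
  rewrite muleCA; apply: lee_wpmul2l => //.
  apply: (IH _ _ j) => // [z zs|z zs|z zs]; first by apply: F0; rewrite /= zs.
    by apply: G0; rewrite /= zs.
  by have := FG (y :: z); rewrite /= zs; apply.
exact: nnint_scale (expR_gt0 _).
Qed.
End iintlemmas.
Section alg.
Context {R : realType} (K : nat) (beta delta eps : R)
  (c : R -> nat -> nat -> nat -> nat -> R -> R).
Local Open Scope ring_scope.
Local Notation stR := (@st R).

Definition ahat (s : stR) := argmax_in (s_mu s) (iota 0 K).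
Definition glr (s : stR) b := (s_mu s (ahat s) - s_mu s b) ^+ 2
                 / ((s_Nt s (ahat s))%:R^-1 + (s_Nt s b)%:R^-1).
Definition stopb (s : stR) := all (fun b => (b == ahat s) ||
        (2 * c eps (s_k s (ahat s)) (s_k s b) (s_Nt s (ahat s)) (s_Nt s b) delta
           <= glr s b)) (iota 0 K).
Definition idxf (s : stR) a := s_mu s a + Num.sqrt ((s_k s a)%:R / (s_Nt s a)%:R)
                 + (s_k s a)%:R / (eps * (s_Nt s a)%:R).
Definition leaderB (s : stR) := argmax_in (idxf s) (iota 0 K).
Definition tcf (s : stR) a := (s_mu s (leaderB s) - s_mu s a)
                / Num.sqrt ((s_cnt s (leaderB s))%:R^-1 + (s_cnt s a)%:R^-1).
Definition chalC (s : stR) := argmin_in (tcf s) [seq a <- iota 0 K | a != leaderB s].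
Definition chooseI (s : stR) :=
  if (s_NB s (leaderB s) (leaderB s))%:R <= beta * ((s_L s (leaderB s)).+1)%:R
  then leaderB s else chalC s.
Definition nextst (s : stR) (X : R) : stR :=
  St (s_n s).+1 (fupd (s_cnt s) (chooseI s) (s_cnt s (chooseI s)).+1) (s_k s) (s_c0 s)
     (s_Nt s) (s_mu s) (fupd (s_sum s) (chooseI s) (s_sum s (chooseI s) + X))
     (fupd (s_L s) (leaderB s) (s_L s (leaderB s)).+1)
     (fun a b => if (a == leaderB s) && (b == chooseI s) then (s_NB s a b).+1
                 else s_NB s a b)
     (s_j s) (rcons (s_pulls s) (chooseI s)).

Definition foldph (z : seq R) (s : stR) := foldl (phase_upd eps z) s (iota 0 K).

Lemma roundE d z s0 : round K beta delta eps c d z s0 =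
  if stopb (foldph z s0) then inl (s_n (foldph z s0), ahat (foldph z s0))
  else inr (nextst (foldph z s0) (d (s_n (foldph z s0)) (chooseI (foldph z s0)))).
Proof. reflexivity. Qed.

Lemma simE d z f s : sim K beta delta eps c d z f.+1 s =
  match round K beta delta eps c d z s with
  | inl o => (s_pulls s, Some o)
  | inr s' => sim K beta delta eps c d z f s' end.
Proof. reflexivity. Qed.

Record sk := Sk { k_cnt : nat -> nat; k_c0 : nat -> nat; k_j : nat }.
Definition proj (s : stR) := Sk (s_cnt s) (s_c0 s) (s_j s).
Definition skel_upd (k : sk) (a : nat) : sk :=
  if (2 * k_c0 k a <= k_cnt k a)%N then Sk (k_cnt k) (fupd (k_c0 k) a (k_cnt k a)) (k_j k).+1
  else k.
Definition skel_pull (k : sk) (I : nat) : sk :=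
  Sk (fupd (k_cnt k) I (k_cnt k I).+1) (k_c0 k) (k_j k).

Lemma proj_phase z s a : proj (phase_upd eps z s a) = skel_upd (proj s) a.
Proof. by rewrite /phase_upd /skel_upd /=; case: ifP. Qed.

Lemma proj_fold z s l : proj (foldl (phase_upd eps z) s l) = foldl skel_upd (proj s) l.
Proof. by elim: l s => //= a l IH s; rewrite IH proj_phase. Qed.

Lemma phase_same z s a : [/\ s_n (phase_upd eps z s a) = s_n s,
  s_pulls (phase_upd eps z s a) = s_pulls s & s_cnt (phase_upd eps z s a) = s_cnt s].
Proof. by rewrite /phase_upd; case: ifP. Qed.

Lemma fold_same z s l : [/\ s_n (foldl (phase_upd eps z) s l) = s_n s,
  s_pulls (foldl (phase_upd eps z) s l) = s_pulls s & s_cnt (foldl (phase_upd eps z) s l) = s_cnt s].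
Proof.
elim: l s => //= a l IH s; have [-> -> ->] := IH (phase_upd eps z s a).
by have [-> -> ->] := phase_same z s a.
Qed.

Lemma kj_upd k a : (k_j k <= k_j (skel_upd k a) <= (k_j k).+1)%N.
Proof. by rewrite /skel_upd; case: ifP => _ /=; rewrite ?leqnn ?leqnSn. Qed.

Lemma kj_fold k l : (k_j k <= k_j (foldl skel_upd k l) <= k_j k + size l)%N.
Proof.
elim: l k => /= [|a l IH] k; first by rewrite addn0 leqnn.
have /andP[h1 h2] := kj_upd k a; have /andP[h3 h4] := IH (skel_upd k a).
apply/andP; split; first exact: leq_trans h1 h3.
by apply: leq_trans h4 _; rewrite addnS -addSn leq_add2r.
Qed.

Lemma kc0_fold_notin k l a : a \notin l -> k_c0 (foldl skel_upd k l) a = k_c0 k a.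
Proof.
elim: l k => //= x l IH k; rewrite in_cons negb_or => /andP[ax al].
rewrite IH // /skel_upd; case: ifP => //= _; rewrite /fupd (negbTE ax) //.
Qed.

Lemma kcnt_fold k l : k_cnt (foldl skel_upd k l) = k_cnt k.
Proof. by elim: l k => //= x l IH k; rewrite IH /skel_upd; case: ifP. Qed.

Definition norm (s : stR) : stR := St (s_n s) (s_cnt s) (s_k s) (s_c0 s) (s_Nt s)
  (fun a => if (a < K)%N then s_mu s a else 0) (s_sum s) (s_L s) (s_NB s) (s_j s) (s_pulls s).

Section argfacts.
Variable (L : seq nat).
Lemma foldl_argmax_eq (f g : nat -> R) : {in L, f =1 g} -> forall l acc, {subset l <= L} -> acc \in L ->
  foldl (fun b i => if f b < f i then i else b) acc l = foldl (fun b i => if g b < g i then i else b) acc l.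
Proof.
move=> H; elim=> //= y l IH acc sub accL.
have yL : y \in L by apply: sub; rewrite mem_head.
rewrite (H acc) // (H y) //; apply: IH; first by move=> w wl; apply: sub; rewrite in_cons wl orbT.
by case: ifP.
Qed.
Lemma foldl_argmin_eq (f g : nat -> R) : {in L, f =1 g} -> forall l acc, {subset l <= L} -> acc \in L ->
  foldl (fun b i => if f i < f b then i else b) acc l = foldl (fun b i => if g i < g b then i else b) acc l.
Proof.
move=> H; elim=> //= y l IH acc sub accL.
have yL : y \in L by apply: sub; rewrite mem_head.
rewrite (H acc) // (H y) //; apply: IH; first by move=> w wl; apply: sub; rewrite in_cons wl orbT.
by case: ifP.
Qed.
Lemma foldl_mem (st : nat -> nat -> nat) : (forall b i, st b i = b \/ st b i = i) ->
  forall l acc, {subset l <= L} -> acc \in L -> foldl st acc l \in L.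
Proof.
move=> H; elim=> //= y l IH acc sub accL; apply: IH.
  by move=> w wl; apply: sub; rewrite in_cons wl orbT.
by case: (H acc y) => ->; last by apply: sub; rewrite mem_head.
Qed.
End argfacts.

Lemma argmax_eq (f g : nat -> R) l : {in l, f =1 g} -> argmax_in f l = argmax_in g l.
Proof.
rewrite /argmax_in => H; case E: l => [//|x l']; rewrite -E.
by apply: (@foldl_argmax_eq l f g H l (head 0%N l)) => //; rewrite E /= mem_head.
Qed.
Lemma argmin_eq (f g : nat -> R) l : {in l, f =1 g} -> argmin_in f l = argmin_in g l.
Proof.
rewrite /argmin_in => H; case E: l => [//|x l']; rewrite -E.
by apply: (@foldl_argmin_eq l f g H l (head 0%N l)) => //; rewrite E /= mem_head.
Qed.
Lemma argmax_mem (f : nat -> R) l : l != [::] -> argmax_in f l \in l.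
Proof.
rewrite /argmax_in; case E: l => [//|x l'] _; rewrite -E.
apply: foldl_mem => //; last by rewrite E /= mem_head.
by move=> b i; case: ifP; [right|left].
Qed.

Lemma iotaK0 : (0 < K)%N -> iota 0 K != [::].
Proof. by case: K. Qed.

Lemma ahat_norm s : (0 < K)%N -> ahat (norm s) = ahat s.
Proof. by move=> _; apply: argmax_eq => a; rewrite mem_iota /= => ->. Qed.
Lemma ahat_mem s : (0 < K)%N -> (ahat s < K)%N.
Proof. by move=> K0; have := @argmax_mem (s_mu s) _ (iotaK0 K0); rewrite mem_iota. Qed.
Lemma leaderB_norm s : (0 < K)%N -> leaderB (norm s) = leaderB s.
Proof. by move=> _; apply: argmax_eq => a; rewrite mem_iota /= /idxf /= => ->. Qed.
Lemma leaderB_mem s : (0 < K)%N -> (leaderB s < K)%N.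
Proof. by move=> K0; have := @argmax_mem (idxf s) _ (iotaK0 K0); rewrite mem_iota. Qed.
Lemma stopb_norm s : (0 < K)%N -> stopb (norm s) = stopb s.
Proof.
move=> K0; rewrite /stopb ahat_norm //; apply: eq_in_all => b; rewrite mem_iota /= => bK.
by rewrite /glr ahat_norm //= bK ahat_mem.
Qed.
Lemma chooseI_norm s : (0 < K)%N -> chooseI (norm s) = chooseI s.
Proof.
move=> K0; rewrite /chooseI /chalC leaderB_norm //=; congr (if _ then _ else _).
apply: argmin_eq => a; rewrite mem_filter mem_iota /= => /andP[_ aK].
by rewrite /tcf leaderB_norm //= aK leaderB_mem.
Qed.
Lemma nextst_norm s X : (0 < K)%N -> nextst (norm s) X = norm (nextst s X).
Proof. by move=> K0; rewrite /nextst chooseI_norm // leaderB_norm. Qed.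

Lemma phase_norm z s a : (a < K)%N -> phase_upd eps z (norm s) a = norm (phase_upd eps z s a).
Proof.
move=> aK; rewrite /phase_upd /=; case: ifP => // _; rewrite /norm /=; congr St.
by apply/funext => x; rewrite /fupd; case: eqP => // ->; rewrite aK.
Qed.
Lemma fold_norm z s l : all (fun a => a < K)%N l ->
  foldl (phase_upd eps z) (norm s) l = norm (foldl (phase_upd eps z) s l).
Proof. by elim: l s => //= a l IH s /andP[aK al]; rewrite phase_norm // IH. Qed.
Lemma foldph_norm z s : foldph z (norm s) = norm (foldph z s).
Proof. by apply: fold_norm; apply/allP => a; rewrite mem_iota. Qed.

Lemma sim_norm d z f s : (0 < K)%N ->
  sim K beta delta eps c d z f (norm s) = sim K beta delta eps c d z f s.
Proof.
move=> K0; elim: f s => // f IH s; rewrite !simE !roundE foldph_norm stopb_norm //.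
case: ifP => _; first by rewrite ahat_norm.
by rewrite chooseI_norm // nextst_norm // IH.
Qed.

Definition addsum (b : nat) (D : R) (s : stR) : stR := St (s_n s) (s_cnt s) (s_k s) (s_c0 s)
  (s_Nt s) (s_mu s) (fun a => s_sum s a + (if a == b then D else 0)) (s_L s) (s_NB s)
  (s_j s) (s_pulls s).

Lemma addsum0 b s : addsum b 0 s = s.
Proof.
case: s => * ; rewrite /addsum /=; congr St; apply/funext => a.
by case: ifP; rewrite addr0.
Qed.

Lemma nextst_add s b D X : nextst (addsum b D s) X = addsum b D (nextst s X).
Proof.
rewrite /nextst /addsum /=; congr St; apply/funext => x; rewrite /fupd.
by case: eqP => // ->; rewrite addrAC.
Qed.

Lemma nextst_add_pull s b D X X' : chooseI s = b ->
  nextst (addsum b D s) X = addsum b (D + (X - X')) (nextst s X').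
Proof.
move=> Ib; rewrite /nextst (_ : chooseI (addsum b D s) = chooseI s) //.
rewrite (_ : leaderB (addsum b D s) = leaderB s) // Ib.
rewrite /addsum /=; congr St; apply/funext => x; rewrite /fupd.
case: ifP => h.
  by rewrite ifT; [lra | exact: eqxx].
by rewrite ifF; [lra | exact: h].
Qed.

Lemma phase_add z z' s a b D : a != b ->
  ((2 * s_c0 s a <= s_cnt s a)%N -> nth 0 z (s_j s) = nth 0 z' (s_j s)) ->
  phase_upd eps z (addsum b D s) a = addsum b D (phase_upd eps z' s a).
Proof.
move=> ab H; rewrite /phase_upd /=; case: ifP => h //; rewrite H //.
rewrite /addsum /=; congr St; apply/funext => x; rewrite /fupd.
  case: ifP => // _; rewrite ifF ?addr0 //; exact: (negbTE ab).
case: ifP => // /eqP xa; subst x; rewrite ifF ?addr0 //; exact: (negbTE ab).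
Qed.

Lemma phase_add_noupd z z' s a b D : ~~ (2 * s_c0 s a <= s_cnt s a)%N ->
  phase_upd eps z (addsum b D s) a = addsum b D (phase_upd eps z' s a).
Proof. by move=> h; rewrite /phase_upd /= (negbTE h). Qed.

Lemma phase_eq z z' s a :
  ((2 * s_c0 s a <= s_cnt s a)%N -> nth 0 z (s_j s) = nth 0 z' (s_j s)) ->
  phase_upd eps z s a = phase_upd eps z' s a.
Proof. by move=> H; rewrite /phase_upd; case: ifP => h //; rewrite H. Qed.

Lemma close_id (S D Z N : R) : eps != 0 ->
  (S + D) / N + Z / (eps * N) = S / N + (Z + eps * D) / (eps * N).
Proof.
move=> e0; have [->|N0] := eqVneq N 0; first by rewrite mulr0 !invr0 !mulr0.
by field; apply/andP; split.
Qed.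

Lemma phase_close z z' s b D : eps != 0 -> (2 * s_c0 s b <= s_cnt s b)%N ->
  nth 0 z' (s_j s) = nth 0 z (s_j s) + eps * D ->
  phase_upd eps z (addsum b D s) b = phase_upd eps z' s b.
Proof.
move=> e0 h H; rewrite /phase_upd /= h H; congr St; apply/funext => x; rewrite /fupd.
  case: ifP => // _; rewrite ifT ?close_id //; exact: eqxx.
case: ifP => // hx; rewrite ifF ?addr0 //; exact: hx.
Qed.

Lemma c0_phase_other z s a b : a != b -> s_c0 (phase_upd eps z s a) b = s_c0 s b.
Proof. by move=> ab; rewrite /phase_upd; case: ifP => //= _; rewrite /fupd eq_sym (negbTE ab). Qed.

Lemma fold_add z z' s l b D : (b \notin l \/ ~~ (2 * s_c0 s b <= s_cnt s b)%N) ->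
  (forall i, (s_j s <= i < k_j (foldl skel_upd (proj s) l))%N -> nth 0 z i = nth 0 z' i) ->
  foldl (phase_upd eps z) (addsum b D s) l = addsum b D (foldl (phase_upd eps z') s l).
Proof.
elim: l s => //= a l IH s Hb Hz.
have Hstep : phase_upd eps z (addsum b D s) a = addsum b D (phase_upd eps z' s a).
  have [ab|ab] := eqVneq a b.
    case: Hb => [|h]; first by rewrite in_cons ab eqxx.
    by rewrite ab; apply: phase_add_noupd.
  apply: phase_add => // h; apply: Hz; rewrite leqnn /=.
  have /andP[h1 _] := kj_fold (skel_upd (proj s) a) l.
  apply: leq_trans h1; rewrite /skel_upd /= h //.
rewrite Hstep IH //.
- case: Hb => [|h]; first by rewrite in_cons negb_or => /andP[_ ->]; left.
  right; have [ab|ab] := eqVneq a b.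
    by rewrite ab /phase_upd (negbTE h).
  by rewrite c0_phase_other //; have [_ _ ->] := phase_same z' s a.
- move=> i /andP[i1 i2]; apply: Hz; rewrite -(proj_phase z' s a) i2 andbT.
  apply: leq_trans i1; have := kj_upd (proj s) a; rewrite -(proj_phase z' s a) /=.
  by case/andP.
Qed.

Lemma fold_eq z z' s l :
  (forall i, (s_j s <= i < k_j (foldl skel_upd (proj s) l))%N -> nth 0 z i = nth 0 z' i) ->
  foldl (phase_upd eps z) s l = foldl (phase_upd eps z') s l.
Proof.
elim: l s => //= a l IH s Hz.
have -> : phase_upd eps z s a = phase_upd eps z' s a.
  apply: phase_eq => h; apply: Hz; rewrite leqnn /=.
  have /andP[h1 _] := kj_fold (skel_upd (proj s) a) l.
  apply: leq_trans h1; rewrite /skel_upd /= h //.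
apply: IH => i /andP[i1 i2]; apply: Hz; rewrite -(proj_phase z' s a) i2 andbT.
apply: leq_trans i1; have := kj_upd (proj s) a; rewrite -(proj_phase z' s a) /=.
by case/andP.
Qed.

Lemma sim_prefix {d z f s P o} : sim K beta delta eps c d z f s = (P, Some o) ->
  exists r, P = s_pulls s ++ r.
Proof.
elim: f s => // f IH s; rewrite simE roundE; case: ifP => _.
  by case=> <- _; exists [::]; rewrite cats0.
move/IH => [r ->]; exists (chooseI (foldph z s) :: r).
by rewrite /= cat_rcons; have [_ -> _] := fold_same z s (iota 0 K).
Qed.


Lemma sj_fold z s l : (s_j s <= s_j (foldl (phase_upd eps z) s l))%N.
Proof.
have := kj_fold (proj s) l; rewrite -(proj_fold z) /= => /andP[] //.
Qed.

Section skel.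
Variable A : seq nat.
Fixpoint skel_iter (k : nat) : sk :=
  match k with
  | 0 => Sk (fun _ => 1%N) (fun _ => 1%N) K
  | k'.+1 => skel_pull (foldl skel_upd (skel_iter k') (iota 0 K)) (nth 0%N A (K + k'))
  end.

Lemma kj_iter_S k : (k_j (skel_iter k) <= k_j (skel_iter k.+1) <= k_j (skel_iter k) + K)%N.
Proof. by rewrite /=; have := kj_fold (skel_iter k) (iota 0 K); rewrite size_iota. Qed.

Lemma kj_iter_mono k k' : (k <= k')%N -> (k_j (skel_iter k) <= k_j (skel_iter k'))%N.
Proof.
move/subnK => <-; elim: (k' - k)%N => [|n IH] //.
by apply: leq_trans IH _; rewrite addSn; case/andP: (kj_iter_S (n + k)).
Qed.

Lemma kj_iter_bound k : (k_j (skel_iter k) <= K + K * k)%N.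
Proof.
elim: k => [|k IH] /=; first by rewrite muln0 addn0.
have /andP[_ h] := kj_fold (skel_iter k) (iota 0 K); rewrite size_iota in h.
move: h IH; rewrite mulnS; lia.
Qed.

Variable b : nat.
Definition closes k := (2 * k_c0 (skel_iter k) b <= k_cnt (skel_iter k) b)%N.
Definition idx k := k_j (foldl skel_upd (skel_iter k) (iota 0 b)).
Fixpoint jclose (f k : nat) : option nat :=
  match f with
  | 0 => None
  | f'.+1 => if closes k then Some (idx k) else jclose f' k.+1
  end.

Lemma jclose_ge f k J : jclose f k = Some J -> (k_j (skel_iter k) <= J)%N.
Proof.
elim: f k => //= f IH k; case: ifP => _.
  by case=> <-; have /andP[] := kj_fold (skel_iter k) (iota 0 b).
move/IH; apply: leq_trans; exact: kj_iter_mono.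
Qed.

Lemma jclose_some f k J : jclose f k = Some J ->
  exists k', [/\ (k <= k')%N, (k' < k + f)%N & J = idx k'].
Proof.
elim: f k => //= f IH k; case: ifP => _.
  by case=> <-; exists k; rewrite leqnn addnS ltnS leq_addr.
move/IH => [k' [h1 h2 ->]]; exists k'; split => //; first exact: ltnW.
by rewrite addnS -addSn.
Qed.
End skel.

Section stages.
Context (d d' : nat -> nat -> R) (z z' : seq R) (A : seq nat) (T t0 j : nat) (del : R)
  (o : nat * nat).
Context (K0 : (0 < K)%N) (sizeA : size A = T) (allA : all (fun x => x < K)%N A)
  (hdd : forall n x, (1 <= n <= T)%N -> n != t0 -> (x < K)%N -> d n x = d' n x)
  (Zr : forall i, nth 0 z' i = nth 0 z i + (if i == j then del else 0)).

Local Notation sim1 := (sim K beta delta eps c d z).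
Local Notation sim2 := (sim K beta delta eps c d' z').

Lemma pull_info {dd zz f S X} : sim K beta delta eps c dd zz f (nextst S X) = (A, Some o) ->
  s_n S = (size (s_pulls S)).+1 ->
  [/\ chooseI S = nth 0%N A (s_n S).-1, (s_n S <= T)%N & (chooseI S < K)%N].
Proof.
move/sim_prefix => [r]; rewrite /nextst /= => EA ->.
have EA' : A = s_pulls S ++ chooseI S :: r by rewrite EA cat_rcons.
have hs : (size (s_pulls S) < T)%N by rewrite -sizeA EA' size_cat /= addnS ltnS leq_addr.
have hI : nth 0%N A (size (s_pulls S)) = chooseI S by rewrite EA' nth_cat ltnn subnn.
split => //.
by have := allP allA (chooseI S); rewrite -hI; apply; rewrite mem_nth // sizeA.
Qed.

Lemma Zeq i : del = 0 \/ i != j -> nth 0 z i = nth 0 z' i.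
Proof. by rewrite Zr => -[->|/negbTE ->]; rewrite ?addr0 //; case: ifP; rewrite addr0. Qed.

Lemma done_stage f s : (del = 0 \/ (j < s_j s)%N) -> (t0 < s_n s)%N ->
  s_n s = (size (s_pulls s)).+1 -> sim1 f s = (A, Some o) -> sim2 f s = (A, Some o).
Proof.
elim: f s => [//|f IH] s Hj Ht Hn; rewrite !simE !roundE.
have FE : foldph z s = foldph z' s.
  apply: fold_eq => i /andP[i1 _]; apply: Zeq; case: Hj => [->|h]; [by left|right].
  by rewrite neq_ltn (leq_trans h i1) orbT.
rewrite /foldph in FE; rewrite /foldph -FE.
set S := foldl (phase_upd eps z) s (iota 0 K).
have [eSn eSp _] := fold_same z s (iota 0 K); rewrite -/S in eSn eSp.
case: ifP => // _ H1.
have Hsz : s_n S = (size (s_pulls S)).+1 by rewrite eSn eSp.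
have [HI HT HK] := pull_info H1 Hsz.
rewrite -hdd //; last by rewrite eSn neq_ltn Ht orbT.
  apply: IH H1 => //=.
  - case: Hj => [|h]; [by left|right]; apply: leq_trans h _; rewrite /S; exact: sj_fold.
  - by rewrite eSn ltnS ltnW.
  - by rewrite size_rcons Hsz.
by rewrite HT andbT eSn Hn.
Qed.


Context (b : nat) (Dl : R) (e0 : eps != 0).

Definition jrel (Jo : option nat) := match Jo with
  | Some J => j = J /\ del = eps * Dl | None => del = 0 end.

Lemma chooseI_add bb D s : chooseI (addsum bb D s) = chooseI s. Proof. by []. Qed.
Lemma stopb_add bb D s : stopb (addsum bb D s) = stopb s. Proof. by []. Qed.
Lemma ahat_add bb D s : ahat (addsum bb D s) = ahat s. Proof. by []. Qed.

Lemma iota_split : (b < K)%N -> iota 0 K = iota 0 b ++ b :: iota b.+1 (K - b.+1).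
Proof.
move=> Hb; rewrite -[in LHS](subnKC (ltnW Hb)) iotaD add0n.
by case E: (K - b)%N => [|r]; [lia | rewrite /=; congr (_ ++ _ :: iota _ _); lia].
Qed.

Lemma post_stage f s : (t0 < s_n s)%N -> (K < s_n s)%N ->
  proj s = skel_iter A (s_n s - K.+1) -> s_n s = (size (s_pulls s)).+1 ->
  (b < K)%N -> jrel (jclose A b (T.+2 - s_n s) (s_n s - K.+1)) ->
  sim1 f (addsum b Dl s) = (A, Some o) -> sim2 f s = (A, Some o).
Proof.
elim: f s => [//|f IH] s Ht HK Hp Hn Hb Hj H.
have HnT : (s_n s <= T.+1)%N.
  have [r Er] := sim_prefix H; rewrite /= in Er.
  by rewrite Hn ltnS -sizeA Er size_cat leq_addr.
have Ef : (T.+2 - s_n s = (T.+1 - s_n s).+1)%N by lia.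
rewrite Ef /= in Hj.
move: H; rewrite !simE !roundE.
have [eSn eSp _] := fold_same z' s (iota 0 K).
have Hsz : s_n (foldph z' s) = (size (s_pulls (foldph z' s))).+1 by rewrite eSn eSp.
case Hc: (closes A b (s_n s - K.+1)) in Hj.
- case: Hj => Hjj Hdel.
  have [FE Hjs] : foldph z (addsum b Dl s) = foldph z' s /\ (j < s_j (foldph z' s))%N.
    rewrite /foldph (iota_split Hb) !foldl_cat.
    have Eidx : k_j (foldl skel_upd (proj s) (iota 0 b)) = j by rewrite Hp Hjj.
    rewrite (fold_add z z'); first last.
    + move=> i /andP[_ i2]; apply: Zeq; right; rewrite neq_ltn -Eidx i2 //.
    + by left; rewrite mem_iota ltnn andbF.
    set Sb := foldl (phase_upd eps z') s (iota 0 b).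
    have Hsj : s_j Sb = j by rewrite -Eidx /Sb -(proj_fold z').
    rewrite /= (phase_close z z') //; first last.
    + by rewrite Zr Hsj eqxx Hdel.
    + have -> : s_c0 Sb b = s_c0 s b.
        have := f_equal k_c0 (proj_fold z' s (iota 0 b)); rewrite /= -/Sb => ->.
        by rewrite kc0_fold_notin // mem_iota ltnn andbF.
      have [_ _ ->] := fold_same z' s (iota 0 b).
      by move: Hc; rewrite /closes -Hp.
    have Hsj' : s_j (phase_upd eps z' Sb b) = j.+1.
      rewrite /phase_upd; case: ifP => //= h; last first.
      have := f_equal k_c0 (proj_fold z' s (iota 0 b)); rewrite /= -/Sb => E0.
      move: h; rewrite E0 kc0_fold_notin ?mem_iota ?ltnn ?andbF //.
      have [_ _ ->] := fold_same z' s (iota 0 b).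
      by move: Hc; rewrite /closes -Hp /= => ->.
      by rewrite Hsj.
    split.
      apply: fold_eq => i /andP[i1 _]; apply: Zeq; right.
      by rewrite neq_ltn -Hsj' i1 orbT.
    by apply: leq_trans (sj_fold _ _ _); rewrite Hsj'.
  rewrite FE; set S := foldph z' s.
  case: ifP => // _ H1.
  have [HI HT HKI] := pull_info H1 Hsz.
  rewrite -hdd //; last by rewrite eSn neq_ltn Ht orbT.
    apply: done_stage H1 => //=.
    - by right.
    - by rewrite eSn ltnS ltnW.
    - by rewrite size_rcons Hsz.
  by rewrite HT andbT eSn Hn.
- have nob : ~~ (2 * s_c0 s b <= s_cnt s b)%N by move: Hc; rewrite /closes -Hp /= => ->.
  have FE : foldph z (addsum b Dl s) = addsum b Dl (foldph z' s).
    apply: fold_add; first by right.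
    move=> i /andP[_ i2]; apply: Zeq.
    move: Hj; case E: jclose => [J|] /=; last by left.
    case=> -> _; right; rewrite neq_ltn; apply/orP; left; apply: leq_trans i2 _.
    by rewrite Hp; exact: (@jclose_ge A b _ _ _ E).
  rewrite FE stopb_add; set S := foldph z' s.
  case: ifP => // _.
  rewrite chooseI_add nextst_add /= => H1.
  have H1' := H1; rewrite -nextst_add in H1'.
  have [HI HT HKI] := pull_info H1' Hsz.
  rewrite chooseI_add in HI HKI.
  have HI2 : chooseI S = nth 0%N A (s_n s).-1 by rewrite HI /= eSn.
  rewrite hdd in H1; first last.
  + by [].
  + by rewrite eSn neq_ltn Ht orbT.
  + by rewrite HT andbT eSn Hn.
  apply: IH H1 => //=.
  + by rewrite eSn ltnS ltnW.
  + by rewrite eSn ltnS ltnW.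
  + rewrite (_ : proj (nextst S _) = skel_pull (proj S) (chooseI S)) // HI2.
    rewrite /S /foldph (proj_fold z') Hp eSn subSS.
    have -> : (s_n s).-1 = (K + (s_n s - K.+1))%N by lia.
    have -> : ((s_n s) - K = (s_n s - K.+1).+1)%N by lia.
    by [].
  + by rewrite size_rcons Hsz.
  + rewrite /S /foldph eSn.
    have -> : ((s_n s).+1 - K.+1 = (s_n s - K.+1).+1)%N by lia.
    by rewrite subSS.
Qed.


Lemma proj_next S X (k : nat) : proj S = foldl skel_upd (skel_iter A k) (iota 0 K) ->
  chooseI S = nth 0%N A (K + k) -> proj (nextst S X) = skel_iter A k.+1.
Proof. by move=> h1 h2; rewrite (_ : proj (nextst S X) = skel_pull (proj S) (chooseI S)) // h1 h2. Qed.

Lemma pre_stage f s : (s_n s <= t0)%N -> (K < s_n s)%N ->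
  proj s = skel_iter A (s_n s - K.+1) -> s_n s = (size (s_pulls s)).+1 ->
  b = nth 0%N A t0.-1 -> Dl = d t0 b - d' t0 b ->
  jrel (jclose A b (T.+1 - t0) (t0 - K)) ->
  sim1 f s = (A, Some o) -> sim2 f s = (A, Some o).
Proof.
elim: f s => [//|f IH] s Ht HK Hp Hn Hbd HDl Hj.
rewrite !simE !roundE.
have [eSn eSp _] := fold_same z' s (iota 0 K).
have FE : foldph z s = foldph z' s.
  apply: fold_eq => i /andP[_ i2]; apply: Zeq.
  move: Hj; case E: jclose => [J|] /=; last by left.
  case=> -> _; right; rewrite neq_ltn; apply/orP; left; apply: leq_trans i2 _.
  apply: leq_trans (@jclose_ge A b _ _ _ E); rewrite Hp.
  apply: (@kj_iter_mono A (s_n s - K.+1).+1); lia.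
rewrite FE; set S := foldph z' s.
have Hsz : s_n S = (size (s_pulls S)).+1 by rewrite /S /foldph eSn eSp.
case: ifP => // _ H1.
have [HI HT HKI] := pull_info H1 Hsz.
have HI2 : chooseI S = nth 0%N A (s_n s).-1 by rewrite HI /S /foldph eSn.
have Hproj X : proj (nextst S X) = skel_iter A ((s_n s).+1 - K.+1).
  have -> : ((s_n s).+1 - K.+1 = (s_n s - K.+1).+1)%N by lia.
  apply: proj_next; first by rewrite /S /foldph (proj_fold z') Hp.
  by rewrite HI2; congr nth; lia.
have eSn' : s_n S = s_n s by rewrite /S /foldph eSn.
case: (ltngtP (s_n s) t0) Ht => // [hlt|heq] _.
- rewrite hdd in H1; first last.
  + by [].
  + by rewrite eSn' neq_ltn hlt.
  + by rewrite HT andbT eSn'; lia.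
  apply: IH H1 => //=.
  + by rewrite eSn'.
  + by rewrite eSn' ltnS ltnW.
  + by rewrite eSn' Hproj.
  + by rewrite size_rcons Hsz.
- have HIb : chooseI S = b by rewrite HI2 heq Hbd.
  have E1 := nextst_add_pull S b 0 (d (s_n S) (chooseI S)) (d' (s_n S) (chooseI S)) HIb.
  rewrite addsum0 in E1; rewrite E1 in H1.
  have ED : 0 + (d (s_n S) (chooseI S) - d' (s_n S) (chooseI S)) = Dl.
    by rewrite add0r HIb eSn' heq HDl.
  rewrite ED in H1.
  apply: post_stage; last exact: H1.
  + by rewrite /= eSn' heq.
  + by rewrite /= eSn' ltnS ltnW.
  + by rewrite /= eSn' Hproj.
  + by rewrite /= size_rcons Hsz.
  + by rewrite -HIb.
  + rewrite /= eSn' heq subSS.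
    by have -> : (t0.+1 - K.+1 = t0 - K)%N by lia.
Qed.

End stages.

Lemma Zr_shift (z : seq R) j del i :
  nth 0 (shift R j del z) i = nth 0 z i + (if i == j then del else 0).
Proof.
rewrite /shift nth_set_nth /=; case: ifP => [/eqP ->|_]; by rewrite ?addr0.
Qed.

Lemma KleT {d z f A T o} : size A = T ->
  sim K beta delta eps c d z f (init K eps d z) = (A, Some o) -> (K <= T)%N.
Proof.
move=> sA /sim_prefix [r Er]; rewrite -sA Er /= size_cat size_iota leq_addr //.
Qed.

Lemma main_rel (d d' : nat -> nat -> R) (A : seq nat) (T t0 ah : nat) :
  (0 < eps) -> (0 < K)%N -> size A = T -> all (fun x => x < K)%N A -> (1 <= t0 <= T)%N ->
  (forall n x, (1 <= n <= T)%N -> n != t0 -> (x < K)%N -> d n x = d' n x) ->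
  (forall x, (x < K)%N -> `|d t0 x - d' t0 x| <= 1) ->
  exists j del, [/\ (j < K * T.+2)%N, `|del| <= eps &
    forall z, sim K beta delta eps c d z T.+1 (init K eps d z) = (A, Some (T.+1, ah)) ->
      sim K beta delta eps c d' (shift R j del z) T.+1 (init K eps d' (shift R j del z))
        = (A, Some (T.+1, ah))].
Proof.
move=> ep K0 sA allA /andP[t01 t0T] hdd hD.
have e0 : eps != 0 by rewrite gt_eqF.
have KT2 : (K <= K * T.+2)%N by rewrite leq_pmulr.
have delb (x : nat) : (x < K)%N -> `|eps * (d t0 x - d' t0 x)| <= eps.
  move=> xK; rewrite normrM (gtr0_norm ep) -[X in _ <= X]mulr1.
  by apply: ler_wpM2l; [exact: ltW | exact: hD].
case: (leqP t0 K) => Ht0K.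
- exists t0.-1, (eps * (d t0 t0.-1 - d' t0 t0.-1)); split.
  + by apply: leq_trans KT2; lia.
  + by apply: delb; lia.
  move=> z H; set z' := shift R _ _ z.
  have Zr := Zr_shift z t0.-1 (eps * (d t0 t0.-1 - d' t0 t0.-1)).
  have KT := KleT sA H.
  have Hnorm : norm (init K eps d z) = norm (init K eps d' z').
    rewrite /norm /init /=; congr St; apply/funext => a; case: ifP => aK //.
    rewrite Zr; case: (eqVneq a t0.-1) => [->|aj].
      by rewrite prednK //; field.
    rewrite addr0 hdd //; first by lia.
    by apply/eqP => h; move/eqP: aj; apply; rewrite -h.
  rewrite -(sim_norm _ _ _ _ K0) Hnorm in H.
  rewrite -(sim_norm _ _ _ _ K0).
  apply: (@done_stage d d' z z' A T t0 t0.-1 _ (T.+1, ah) sA allA hdd Zr _ _ _ _ _ H) => /=.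
  + by right; lia.
  + by rewrite ltnS.
  + by rewrite size_iota.
- set b := nth 0%N A t0.-1.
  have bK : (b < K)%N by apply: (allP allA); rewrite mem_nth // sA; lia.
  set Dl := d t0 b - d' t0 b.
  set Jo := jclose A b (T.+1 - t0) (t0 - K).
  exists (if Jo is Some J then J else 0%N), (if Jo is Some J then eps * Dl else 0); split.
  + case E: Jo => [J|]; last by rewrite muln_gt0 K0.
    have [k' [h1 h2 ->]] := @jclose_some A b _ _ _ E.
    have h3 := kj_iter_bound A k'.
    have /andP[_ h4] := kj_fold (skel_iter A k') (iota 0 b).
    rewrite size_iota in h4.
    have h5 : (idx A b k' < K * k'.+2)%N.
      rewrite /idx; move: h3 h4 bK; rewrite !mulnS; lia.
    apply: leq_trans h5 _; rewrite leq_mul2l; apply/orP; right; lia.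
  + by case: Jo => [J|]; [apply: delb | rewrite normr0 ltW].
  move=> z H.
  set jj := (if Jo is Some J then J else 0%N).
  set dd := (if Jo is Some J then eps * Dl else 0).
  set z' := shift R jj dd z.
  have Zr := Zr_shift z jj dd.
  have KT := KleT sA H.
  have Hnorm : norm (init K eps d z) = norm (init K eps d' z').
    rewrite /norm /init /=; congr St; apply/funext => a; case: ifP => aK //.
    have h1 : (0 < a.+1 <= T)%N by lia.
    have h2 : a.+1 != t0 by rewrite neq_ltn ltnS; apply/orP; left; lia.
    rewrite Zr hdd //.
    rewrite (_ : (if a == jj then dd else 0) = 0) ?addr0 //.
    rewrite /jj /dd; case E: Jo => [J|]; last by case: ifP.
    have := @jclose_ge A b _ _ _ E => h; have := @kj_iter_mono A _ _ (leq0n (t0 - K)) => h'.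
    rewrite ifF //; apply/negbTE; rewrite neq_ltn; apply/orP; left.
    by apply: leq_trans h; apply: leq_trans h'.
  rewrite -(sim_norm _ _ _ _ K0) Hnorm in H.
  rewrite -(sim_norm _ _ _ _ K0).
  apply: (@pre_stage d d' z z' A T t0 jj dd (T.+1, ah) K0 sA allA hdd Zr b Dl e0 _ _ _ _ _ _ _ _ _ H) => //=.
  + by rewrite subnn.
  + by rewrite size_iota.
  + by rewrite /jj /dd -/Jo; case E: Jo.
Qed.

End alg.

Local Close Scope classical_set_scope.

Theorem theorem3 (R : realType) (K : nat) (eps beta delta : R)
  (c : R -> nat -> nat -> nat -> nat -> R -> R) :
  0 < eps -> 0 < beta < 1 -> 0 < delta < 1 ->
  (forall k1 k2 n1 n2 : nat, 0 <= c eps k1 k2 n1 n2 delta) ->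
  forall (T : nat) (d d' : nat -> nat -> R),
  (forall t a, (1 <= t <= T)%N -> (a < K)%N -> 0 <= d t a <= 1) ->
  (forall t a, (1 <= t <= T)%N -> (a < K)%N -> 0 <= d' t a <= 1) ->
  (exists t0, [/\ (1 <= t0 <= T)%N,
     (exists2 a, (a < K)%N & d t0 a != d' t0 a) &
     forall t a, (1 <= t <= T)%N -> t != t0 -> (a < K)%N -> d t a = d' t a]) ->
  forall (a : T.-tuple 'I_K) (ahat : 'I_K),
  (traj_prob K beta delta eps c d (map val a) ahat T
     <= (expR eps)%:E * traj_prob K beta delta eps c d' (map val a) ahat T)%E.
Proof.
move=> ep _ _ _ T d d' hd hd' [t0 [t0T [x0 x0K _] hdd]] a ah.
have K0 : (0 < K)%N by apply: leq_ltn_trans x0K.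
set A := map val a.
have sA : size A = T by rewrite size_map size_tuple.
have allA : all (fun x => x < K)%N A.
  by apply/allP => x /mapP [y _ ->]; exact: ltn_ord.
have hD : forall x, (x < K)%N -> `|d t0 x - d' t0 x| <= 1.
  move=> x xK; have /andP[h1 h2] := hd t0 x t0T xK; have /andP[h3 h4] := hd' t0 x t0T xK.
  by rewrite ler_norml; apply/andP; split; lra.
have [j [del [jm dle Hrel]]] :=
  main_rel K beta delta eps c d d' A T t0 (nat_of_ord ah) ep K0 sA allA t0T hdd hD.
rewrite /traj_prob.
apply: (@iint_dp R (K * T.+2) _ _ j eps del ep dle jm).
- by move=> z _; case: traj_event; rewrite lee_fin.
- by move=> z _; case: traj_event; rewrite lee_fin.
move=> z _; rewrite /traj_event.
case: eqP => [H|_]; last by case: eqP; rewrite lee_fin.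
by rewrite (Hrel z H) eqxx.
Qed.
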